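(* Let $X$ be a real Banach space with a normalized boundedly complete basis $\mathcal B=(e_n)_{n=1}^\infty$ with biorthogonal functionals $(e_n^* )$, and let $\mathcal E=(\varepsilon_n)_{n=1}^\infty$ be a sequence of nonnegative numbers. If the brick $K_{\mathcal B,\mathcal E}$ is norm-bounded, then it contains an extreme point.
   Context: The brick is $K_{\mathcal B,\mathcal E}=\{x\in X:\ |e_n^*(x)|\le\varepsilon_n \text{ for all } n\}$. A basis is boundedly complete if for every scalar sequence $(a_n)$, $\sup_n\|\sum_{k=1}^na_ke_k\|<\infty$ implies convergence of $\sum_n a_ne_n$. A point $x_0\in A$ is an extreme point of $A$ if for every nonzero $x\in X$ there is $\lambda\in[-1,1]$ with $x_0+\lambda x\notin A$. *)

(* Defs.v *)
From HB Require Import structures.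
From mathcomp Require Import all_boot all_order all_algebra.
From mathcomp Require Import all_classical all_reals all_analysis.
Set Implicit Arguments. Unset Strict Implicit. Unset Printing Implicit Defensive.
Import Order.TTheory GRing.Theory Num.Theory.
Import numFieldNormedType.Exports.
Local Open Scope classical_set_scope.
Local Open Scope ring_scope.

Section Defs.
Variables (R : realType) (X : completeNormedModType R).

Definition psum (a : nat -> R) (e : nat -> X) : nat -> X :=
  fun N => \sum_(k < N) a k *: e k.

Definition schauder_basis (e : nat -> X) : Prop :=
  forall x : X, exists! a : nat -> R, psum a e @ \oo --> x.

(* es are the biorthogonal (coordinate) functionals of the basis e:
   x = sum_n es n x e_n for every x *)
Definition coord_functionals (e : nat -> X) (es : nat -> X -> R) : Prop :=
  forall x : X, psum (fun n => es n x) e @ \oo --> x.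

Definition normalized (e : nat -> X) : Prop := forall n, `|e n| = 1.

Definition boundedly_complete (e : nat -> X) : Prop :=
  forall a : nat -> R,
    (exists M : R, forall N, `|psum a e N| <= M) -> cvg (psum a e @ \oo).

Definition brick (es : nat -> X -> R) (eps : nat -> R) : set X :=
  [set x | forall n, `|es n x| <= eps n].

Definition norm_bounded (A : set X) : Prop :=
  exists M : R, forall x, A x -> `|x| <= M.

Definition extreme_point (A : set X) (x0 : X) : Prop :=
  A x0 /\ forall x : X, x != 0 ->
    exists2 l : R, -1 <= l <= 1 & ~ A (x0 + l *: x).
End Defs.

(* Main.v *)
Require Import Defs.
From HB Require Import structures.
From mathcomp Require Import all_boot all_order all_algebra.
From mathcomp Require Import all_classical all_reals all_analysis.
From mathcomp Require Import lra.
Import Order.TTheory GRing.Theory Num.Theory.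
Import numFieldNormedType.Exports.
Local Open Scope classical_set_scope.
Local Open Scope ring_scope.

Lemma coefE (R : realType) (X : completeNormedModType R)
  (e : nat -> X) (es : nat -> X -> R) (a : nat -> R) (x : X) :
  schauder_basis e -> coord_functionals e es ->
  psum a e @ \oo --> x -> forall n, es n x = a n.
Proof.
move=> Hsb Hc Ha n.
have [b [_ Hu]] := Hsb x.
have h1 := Hu _ Ha.
have h2 := Hu _ (Hc x).
by rewrite -[a]h1 h2.
Qed.

Arguments coefE {R X e es a x}.

Lemma psum_lin (R : realType) (X : completeNormedModType R)
  (e : nat -> X) (a b : nat -> R) (l : R) N :
  psum (fun k => a k + l * b k) e N = psum a e N + l *: psum b e N.
Proof.
rewrite /psum scaler_sumr -big_split /=; apply: eq_bigr => k _.
by rewrite scalerDl scalerA.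
Qed.

Arguments psum_lin {R X}.

Theorem proposition2p10 (R : realType) (X : completeNormedModType R)
  (e : nat -> X) (es : nat -> X -> R) (eps : nat -> R) :
  schauder_basis e -> coord_functionals e es ->
  normalized e -> boundedly_complete e ->
  (forall n, 0 <= eps n) ->
  norm_bounded (brick es eps) ->
  exists x0 : X, extreme_point (brick es eps) x0.
Proof.
move=> Hsb Hc Hn Hbc Heps [M HM].
have Hb : exists M0 : R, forall N, `|psum eps e N| <= M0.
  exists M => N; apply: HM => n.
  pose a := fun k => if (k < N)%N then eps k else 0.
  have Ha : psum a e @ \oo --> psum eps e N.
    apply: cvg_near_cst; near=> K.
    have hK : (N <= K)%N by near: K; exact: nbhs_infty_ge.
    rewrite /psum -(subnKC hK) big_split_ord /=.
    rewrite [X in _ + X]big1 ?addr0.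
      by apply: eq_bigr => i _; rewrite /a /= ltn_ord.
    by move=> i _; rewrite /a /= ltnNge leq_addr /= scale0r.
  rewrite (coefE Hsb Hc Ha n) /a; case: ifP => _; first by rewrite ger0_norm.
  by rewrite normr0 Heps.
have /cvg_ex [x0 Hx0] := Hbc _ Hb.
have Ex0 := coefE Hsb Hc Hx0.
exists x0; split.
  by move=> n; rewrite Ex0 ger0_norm.
move=> x xn0.
have [n Hxn] : exists n, es n x != 0.
  apply: contrapT => H.
  have H0 : (fun n => es n x) = fun=> 0.
    apply/funext => n; apply/eqP; apply: contrapT => hn; apply: H; exists n; exact/negP.
  have Hcx := Hc x; rewrite H0 in Hcx.
  have : psum (fun=> 0) e @ \oo --> (0 : X).
    apply: cvg_near_cst; near=> K.
    by rewrite /psum big1 // => i _; rewrite scale0r.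
  move=> Hz; move: xn0; rewrite (cvg_unique _ Hcx Hz) //.
  by rewrite eqxx.
pose l : R := if 0 < es n x then 1 else -1.
exists l.
  by rewrite /l; case: ifP => _; apply/andP; split; lra.
move=> /(_ n).
have Hs : psum (fun k => eps k + l * es k x) e @ \oo --> x0 + l *: x.
  have -> : psum (fun k => eps k + l * es k x) e =
            (fun N => psum eps e N + l *: psum (fun k => es k x) e N).
    by apply/funext => N; rewrite psum_lin.
  apply: cvgD => //; apply: cvgZ => //; first exact: cvg_cst.
rewrite (coefE Hsb Hc Hs n).
have Hpos : 0 < l * es n x.
  rewrite /l; case: ifP => h; first by rewrite mul1r.
  by rewrite mulN1r oppr_gt0 lt_neqAle Hxn /= leNgt h.
rewrite ger0_norm; last by apply: addr_ge0 => //; exact: ltW.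
by rewrite -lerBrDl subrr leNgt Hpos.
Unshelve. all: by end_near.
Qed.
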